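(* Let $\hat M_1,\dots,\hat M_N$ be real $d\times d$ matrices and $\mathcal L(U)=\sum_{n=1}^N\|{\rm low}(U^T\hat M_nU)\|^2$ for $U\in\mathbb O(d)$. If $U$ is a stationary point of $\mathcal L$ on $\mathbb O(d)$, then $S-S^T=0$, where $S=\sum_{n=1}^N\big[U^T\hat M_n^TU,\ {\rm low}(U^T\hat M_nU)\big]$.
   Context: $\|\cdot\|$ is the Frobenius norm; ${\rm low}(A)$ is the strictly lower-triangular part of $A$ ($[{\rm low}(A)]_{ij}=A_{ij}$ if $i>j$, else $0$); $[A,B]=AB-BA$. $\mathbb O(d)$ is the manifold of orthogonal matrices; $U$ is a stationary point if $\frac{d}{dt}\mathcal L(Ue^{tX})|_{t=0}=0$ for every skew-symmetric $X$. *)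

(* Defs.v *)
From HB Require Import structures.
From mathcomp Require Import all_boot all_order all_algebra.
From mathcomp Require Import all_classical all_reals all_analysis.
Set Implicit Arguments. Unset Strict Implicit. Unset Printing Implicit Defensive.
Import Order.TTheory GRing.Theory Num.Theory.
Import numFieldNormedType.Exports.
Local Open Scope ring_scope.

Definition low (R : pzRingType) (d : nat) (A : 'M[R]_d) : 'M[R]_d :=
  \matrix_(i < d, j < d) (if (j < i)%N then A i j else 0).

Definition frob2 (R : pzRingType) (d : nat) (A : 'M[R]_d) : R :=
  \sum_(i < d) \sum_(j < d) A i j ^+ 2.

Definition mx_commutator (R : pzRingType) (d : nat) (A B : 'M[R]_d) : 'M[R]_d :=
  A *m B - B *m A.

Fixpoint mxpow (R : pzRingType) (d : nat) (A : 'M[R]_d) (k : nat) : 'M[R]_d :=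
  match k with 0 => 1%:M | k'.+1 => A *m mxpow A k' end.

Definition expm (R : realType) (d : nat) (A : 'M[R]_d) : 'M[R]_d :=
  \matrix_(i < d, j < d) (limn (series (fun k : nat => mxpow A k i j / (k`!)%:R))).

Definition orthogonal_mx (R : pzRingType) (d : nat) (U : 'M[R]_d) : Prop :=
  U^T *m U = 1%:M.

Definition skew (R : pzRingType) (d : nat) (X : 'M[R]_d) : Prop :=
  X^T = - X.

Definition loss (R : pzRingType) (d N : nat) (M : 'I_N -> 'M[R]_d) (U : 'M[R]_d) : R :=
  \sum_(n < N) frob2 (low (U^T *m M n *m U)).

Definition stationary (R : realType) (d N : nat) (M : 'I_N -> 'M[R]_d) (U : 'M[R]_d) : Prop :=
  forall X : 'M[R]_d, skew X ->
    is_derive (0 : R) (1 : R) (fun t : R => loss M (U *m expm (t *: X))) 0.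

(* Main.v *)
Require Import Defs.
From HB Require Import structures.
From mathcomp Require Import all_boot all_order all_algebra.
From mathcomp Require Import all_classical all_reals all_analysis.
From mathcomp Require Import ring.
Import Order.TTheory GRing.Theory Num.Theory.
Import numFieldNormedType.Exports.
Set Implicit Arguments. Unset Strict Implicit. Unset Printing Implicit Defensive.
Local Open Scope ring_scope.

Section A.
Variables (R : realType) (d : nat).

Lemma mxpowZ (t : R) (X : 'M[R]_d) k : mxpow (t *: X) k = t ^+ k *: mxpow X k.
Proof.
elim: k => [|k IH] /=; first by rewrite scale1r.
by rewrite IH -scalemxAl -scalemxAr scalerA exprS.
Qed.

Lemma mxpow_bound (X : 'M[R]_d) k i j :
  `|mxpow X k i j| <= (\sum_i \sum_j `|X i j|) ^+ k.
Proof.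
set m := \sum_i _.
elim: k i j => [|k IH] i j /=.
  by rewrite expr0 mxE; case: (i == j) => /=; rewrite ?normr1 ?normr0.
rewrite mxE exprS.
apply: (le_trans (ler_norm_sum _ _ _)).
apply: (@le_trans _ _ (\sum_l `|X i l| * m ^+ k)).
  apply: ler_sum => l _; rewrite normrM ler_wpM2l //.
rewrite -mulr_suml; apply: ler_wpM2r; first by rewrite exprn_ge0 // sumr_ge0 // => l _; apply: sumr_ge0.
rewrite /m [X in _ <= X](bigD1 i) //= lerDl; apply: sumr_ge0 => l _; apply: sumr_ge0 => *; done.
Qed.


Lemma pseries_at0 (f : R^nat) : limn (pseries f 0) = f 0.
Proof.
apply: lim_near_cst => //; exists 1%N => // n /= n1.
rewrite /pseries /series /=.
case: n n1 => // n _; rewrite big_nat_recl // expr0 mulr1 big1 ?addr0 // => i _.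
by rewrite expr0n mulr0.
Qed.

Lemma cvg_bnd (u : R^nat) (m a : R) : 0 <= m -> 0 <= a ->
  (forall k, `|u k| <= a * (m ^+ k / k`!%:R)) -> cvgn (series u).
Proof.
move=> m0 a0 H; apply: normed_cvg.
apply: (@series_le_cvg R _ (a *: exp_coeff m)).
- by move=> k; exact: normr_ge0.
- by move=> k; rewrite /= mulr_ge0 // divr_ge0 // exprn_ge0.
- by move=> k; exact: H.
by apply: is_cvg_seriesZ; apply: is_cvg_series_exp_coeff.
Qed.

Lemma diffs_bnd (c : R^nat) (m a : R) :
  (forall k, `|c k| <= a * (m ^+ k / k`!%:R)) ->
  (forall k, `|pseries_diffs c k| <= (a * m) * (m ^+ k / k`!%:R)).
Proof.
move=> H k; rewrite /pseries_diffs normrM ger0_norm // .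
apply: (le_trans (ler_wpM2l _ (H k.+1))) => //.
rewrite le_eqVlt; apply/orP; left; apply/eqP.
have h1 : k.+1%:R != 0 :> R by rewrite pnatr_eq0.
have h2 : k`!%:R != 0 :> R by rewrite pnatr_eq0 -lt0n fact_gt0.
rewrite factS natrM exprS; field; by rewrite h2 addrC natr1 h1.
Qed.

Lemma expm_entry (X : 'M[R]_d) i j (t : R) :
  expm (t *: X) i j = limn (pseries (fun k => mxpow X k i j / k`!%:R) t).
Proof.
rewrite /expm mxE /pseries; congr (limn (series _)); apply/funext => k.
rewrite mxpowZ mxE /=; ring.
Qed.

Lemma expm0 (X : 'M[R]_d) : expm (0 *: X) = 1%:M.
Proof.
by apply/matrixP => i j; rewrite expm_entry pseries_at0 /= fact0 divr1.
Qed.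

Lemma expm_derive (X : 'M[R]_d) i j :
  is_derive (0 : R) (1 : R) (fun t => expm (t *: X) i j) (X i j).
Proof.
set c := fun k => mxpow X k i j / k`!%:R.
have -> : (fun t => expm (t *: X) i j) = (fun t => limn (pseries c t)).
  by apply/funext => t; rewrite expm_entry.
pose m : R := \sum_i \sum_j `|X i j|.
have m0 : 0 <= m by apply: sumr_ge0 => *; apply: sumr_ge0.
have B0 : forall k, `|c k| <= 1 * (m ^+ k / k`!%:R).
  move=> k; rewrite mul1r /c normrM normfV normr_nat.
  by apply: ler_wpM2r; [rewrite invr_ge0|apply: mxpow_bound].
have B1 := @diffs_bnd c m 1 B0.
have B2 := @diffs_bnd _ m _ B1.
have P1 : forall (g : R^nat) (a : R), 0 <= a ->
    (forall k, `|g k| <= a * (m ^+ k / k`!%:R)) -> cvgn (pseries g 1).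
  move=> g a a0 H; rewrite /pseries; apply: (@cvg_bnd _ m a) => // k /=.
  by rewrite expr1n mulr1.
have C0 := P1 _ _ ler01 B0.
have C1 : cvgn (pseries (pseries_diffs c) 1) by apply: (P1 _ _ _ B1); rewrite mul1r.
have C2 : cvgn (pseries (pseries_diffs (pseries_diffs c)) 1).
  by apply: (P1 _ _ _ B2); rewrite mul1r mulr_ge0.
have lt01 : `|0 : R| < `|1 : R| by rewrite normr0 normr1.
have D := @pseries_snd_diffs R c 1 0 C0 C1 C2 lt01.
apply: (is_derive_eq D).
by rewrite pseries_at0 /pseries_diffs /c /= mul1r factS fact0 muln1 divr1 mulmx1.
Qed.


Lemma is_derive_sumf n (h : 'I_n -> R -> R) (dh : 'I_n -> R) :
  (forall i, is_derive (0:R) (1:R) (h i) (dh i)) ->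
  is_derive (0:R) (1:R) (fun t => \sum_(i < n) h i t) (\sum_(i < n) dh i).
Proof.
move=> H; have -> : (fun t => \sum_(i < n) h i t) = \sum_(i < n) h i.
  by rewrite fct_sumE.
exact: is_derive_sum.
Qed.

Lemma is_derive_mulf (f g : R -> R) df dg :
  is_derive (0:R) (1:R) f df -> is_derive (0:R) (1:R) g dg ->
  is_derive (0:R) (1:R) (fun t => f t * g t) (f 0 * dg + g 0 * df).
Proof. move=> Hf Hg; exact: (is_deriveM Hf Hg). Qed.

Definition Dmx (F : R -> 'M[R]_d) (F' : 'M[R]_d) :=
  forall i j, is_derive (0:R) (1:R) (fun t => F t i j) (F' i j).

Lemma Dmx_mul F G F' G' : Dmx F F' -> Dmx G G' ->
  Dmx (fun t => F t *m G t) (F' *m G 0 + F 0 *m G').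
Proof.
move=> HF HG i j.
have -> : (fun t => (F t *m G t) i j) = (fun t => \sum_k (F t i k * G t k j)).
  by apply/funext => t; rewrite mxE.
apply: is_derive_eq; first by apply: is_derive_sumf => k; apply: is_derive_mulf.
by rewrite !mxE addrC -big_split /=; apply: eq_bigr => k _; ring.
Qed.

Lemma Dmx_tr F F' : Dmx F F' -> Dmx (fun t => (F t)^T) F'^T.
Proof.
move=> HF i j.
have -> : (fun t => (F t)^T i j) = (fun t => F t j i) by apply/funext => t; rewrite mxE.
by rewrite mxE.
Qed.

Lemma Dmx_cst (A : 'M[R]_d) : Dmx (fun _ => A) 0.
Proof. by move=> i j; rewrite mxE; apply: is_derive_cst. Qed.

Lemma Dmx_low F F' : Dmx F F' -> Dmx (fun t => low (F t)) (low F').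
Proof.
move=> HF i j.
have -> : (fun t => low (F t) i j) = (fun t => if (j < i)%N then F t i j else 0).
  by apply/funext => t; rewrite mxE.
rewrite mxE; case: (j < i)%N => //; exact: is_derive_cst.
Qed.

Lemma D_frob F F' : Dmx F F' ->
  is_derive (0:R) (1:R) (fun t => frob2 (F t))
    (\sum_i \sum_j (F 0 i j * F' i j + F 0 i j * F' i j)).
Proof.
move=> HF; rewrite /frob2.
have -> : (fun t => \sum_i \sum_j F t i j ^+ 2) =
          (fun t => \sum_i \sum_j (F t i j * F t i j)).
  by apply/funext => t; apply: eq_bigr => i _; apply: eq_bigr => j _; rewrite expr2.
apply: is_derive_sumf => i; apply: is_derive_sumf => j.
exact: is_derive_mulf.
Qed.


Lemma deltaM (A : 'M[R]_d) (a b : 'I_d) :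
  delta_mx a b *m A = \matrix_(i, j) ((i == a)%:R * A b j).
Proof.
apply/matrixP => i j; rewrite !mxE (bigD1 b) //= mxE eqxx andbT big1 ?addr0 //.
by move=> k /negPf kb; rewrite mxE kb andbF mul0r.
Qed.

Lemma Mdelta (A : 'M[R]_d) (a b : 'I_d) :
  A *m delta_mx a b = \matrix_(i, j) (A i a * (j == b)%:R).
Proof.
apply/matrixP => i j; rewrite !mxE (bigD1 a) //= mxE eqxx /= big1 ?addr0 //.
by move=> k /negPf kb; rewrite mxE kb /= mulr0.
Qed.

Lemma sum_row (F : 'I_d -> 'I_d -> R) (b : 'I_d) :
  \sum_i \sum_j (i == b)%:R * F i j = \sum_j F b j.
Proof.
have Z : \sum_(i | i != b) \sum_j (i == b)%:R * F i j = 0.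
  by apply: big1 => i /negPf ib; apply: big1 => j _; rewrite ib mul0r.
rewrite (bigD1 b) //= Z addr0; apply: eq_bigr => j _; by rewrite eqxx mul1r.
Qed.

Lemma sum_col (F : 'I_d -> 'I_d -> R) (b : 'I_d) :
  \sum_i \sum_j (j == b)%:R * F i j = \sum_i F i b.
Proof.
apply: eq_bigr => i _.
have Z : \sum_(j | j != b) (j == b)%:R * F i j = 0.
  by apply: big1 => j /negPf jb; rewrite jb mul0r.
by rewrite (bigD1 b) //= Z addr0 eqxx mul1r.
Qed.

Lemma low_inner (A Y : 'M[R]_d) :
  \sum_i \sum_j low A i j * low Y i j = \sum_i \sum_j low A i j * Y i j.
Proof.
apply: eq_bigr => i _; apply: eq_bigr => j _; rewrite !mxE.
by case: (j < i)%N; rewrite ?mul0r.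
Qed.

Lemma key (A : 'M[R]_d) (a b : 'I_d) :
  \sum_i \sum_j low A i j *
     low ((delta_mx a b - delta_mx b a)^T *m A + A *m (delta_mx a b - delta_mx b a)) i j
  = (mx_commutator A^T (low A) - (mx_commutator A^T (low A))^T) a b.
Proof.
rewrite low_inner linearB /= !trmx_delta mulmxBl mulmxBr !deltaM !Mdelta.
set L := low A.
have E : forall i j, L i j *
   (\matrix_(i0, j0) ((i0 == b)%:R * A a j0) - \matrix_(i0, j0) ((i0 == a)%:R * A b j0) +
    (\matrix_(i0, j0) (A i0 a * (j0 == b)%:R) - \matrix_(i0, j0) (A i0 b * (j0 == a)%:R))) i j
   = (i == b)%:R * (L i j * A a j) - (i == a)%:R * (L i j * A b j)
     + ((j == b)%:R * (L i j * A i a) - (j == a)%:R * (L i j * A i b)).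
  by move=> i j; rewrite !mxE; ring.
under eq_bigr do under eq_bigr do rewrite E.
under eq_bigr do rewrite big_split /= !sumrB.
rewrite big_split /= !sumrB.
rewrite (sum_row (fun i j => L i j * A a j)) (sum_row (fun i j => L i j * A b j)).
rewrite (sum_col (fun i j => L i j * A i a)) (sum_col (fun i j => L i j * A i b)).
rewrite /mx_commutator !mxE.
have t1 : \sum_j A^T a j * L j b = \sum_i L i b * A i a.
  by apply: eq_bigr => i _; rewrite [A^T _ _]mxE mulrC.
have t2 : \sum_j L a j * A^T j b = \sum_j L a j * A b j.
  by apply: eq_bigr => i _; rewrite [A^T _ _]mxE.
have t3 : \sum_j A^T b j * L j a = \sum_i L i a * A i b.
  by apply: eq_bigr => i _; rewrite [A^T _ _]mxE mulrC.
have t4 : \sum_j L b j * A^T j a = \sum_j L b j * A a j.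
  by apply: eq_bigr => i _; rewrite [A^T _ _]mxE.
rewrite t1 t2 t3 t4; ring.
Qed.

End A.

Theorem lemma5 (R : realType) (d N : nat) (M : 'I_N -> 'M[R]_d) (U : 'M[R]_d) :
  orthogonal_mx U -> stationary M U ->
  let S := \sum_(n < N) mx_commutator (U^T *m (M n)^T *m U) (low (U^T *m M n *m U)) in
  S - S^T = 0.
Proof.
move=> oU st S.
pose A n := U^T *m M n *m U.
pose C n := mx_commutator (A n)^T (low (A n)).
have HS : S = \sum_n C n.
  by apply: eq_bigr => n _; rewrite /C /A !trmx_mul trmxK mulmxA.
apply/matrixP => a b.
pose X : 'M[R]_d := delta_mx a b - delta_mx b a.
have skX : Defs.skew X by rewrite /Defs.skew /X linearB /= !trmx_delta opprB.
have Hs := st X skX.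
have DE : Dmx (fun t => expm (t *: X)) X := expm_derive X.
pose DD := \sum_n \sum_i \sum_j
   (low (A n) i j * low (X^T *m A n + A n *m X) i j +
    low (A n) i j * low (X^T *m A n + A n *m X) i j).
have Hf : is_derive (0:R) (1:R) (fun t => loss M (U *m expm (t *: X))) DD.
  have -> : (fun t => loss M (U *m expm (t *: X))) =
     (fun t => \sum_n frob2 (low ((expm (t *: X))^T *m A n *m expm (t *: X)))).
    by apply/funext => t; rewrite /loss; apply: eq_bigr => n _; rewrite /A trmx_mul !mulmxA.
  apply: is_derive_eq.
    apply: is_derive_sumf => n.
    exact: (D_frob (Dmx_low (Dmx_mul (Dmx_mul (Dmx_tr DE) (Dmx_cst (A n))) DE))).
  rewrite /DD; apply: eq_bigr => n _ /=.
  by rewrite expm0 trmx1 !mul1mx !mulmx1 addr0.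
have e1 := @derive_val _ _ _ _ _ _ _ Hs.
have e2 := @derive_val _ _ _ _ _ _ _ Hf.
rewrite e1 in e2.
have e3 : DD = 2 * \sum_n \sum_i \sum_j (low (A n) i j * low (X^T *m A n + A n *m X) i j).
  rewrite /DD mulr_sumr; apply: eq_bigr => n _; rewrite mulr_sumr; apply: eq_bigr => i _.
  rewrite mulr_sumr; apply: eq_bigr => j _; ring.
have e4 : \sum_n \sum_i \sum_j (low (A n) i j * low (X^T *m A n + A n *m X) i j) = 0.
  move/esym/eqP: e2; rewrite e3 mulf_eq0 pnatr_eq0 /=; exact/eqP.
have -> : (0 : 'M[R]_d) a b = 0 by rewrite mxE.
rewrite HS raddf_sum -sumrB summxE -[RHS]e4; apply: eq_bigr => n _.
by rewrite /C key.
Qed.
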